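(* Let $G=\langle S_k\mid K\rangle$ be a finitely generated semigroup as described in the context, $\mathcal{A}$ a finite alphabet and $X\subseteq\mathcal{A}^G$ a tree shift. If $K$ is primitive, then for every $1\le i\le k$ the limit $\lim_{n\to\infty}\log p^{(s_i)}_n/|\bar{\Delta}^{(s_i)}_n|$ exists and \[\lim_{n\to\infty}\frac{\log p^{(s_i)}_n}{|\bar{\Delta}^{(s_i)}_n|}=\inf_{n\ge0}\max_{1\le j\le k}\frac{\log p^{(s_j)}_n}{|\bar{\Delta}^{(s_j)}_n|}.\]
   Context: Let $K$ be a $k\times k$ matrix with entries in $\{0,1\}$ indexed by $S_k=\{s_1,\dots,s_k\}$, and let $G=\langle S_k\mid K\rangle$ be the semigroup generated by $S_k$ subject to the relations $s_is_j=1_G$ if and only if $K(s_i,s_j)=0$ ($1_G$ the identity). Every $g\in G$ has a unique minimal representation $g=g_1g_2\cdots g_n$ with $g_l\in S_k$ and $K(g_l,g_{l+1})=1$; its length is $|g|=n$ (with $|1_G|=0$). For $g\in G$ and $n\ge0$ the $n$-semiball at $g$ is $\bar{\Delta}^{(g)}_n=\{gh: h\in G,\ |h|\le n,\ |gh|=|g|+|h|\}$. For a finite alphabet $\mathcal{A}$, a pattern is a map $u:H\to\mathcal{A}$ with $H\subset G$ finite; $u$ is accepted by $t\in\mathcal{A}^G$ if there is $g\in G$ with $t_{gh}=u_h$ for all $h\in H$. A tree shift is a subset $X\subseteq\mathcal{A}^G$ consisting of all $t$ that accept no pattern from some fixed set $\mathcal{F}$ of patterns. $p^{(g)}_n$ denotes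 the number of patterns $u\in\mathcal{A}^{\bar{\Delta}^{(g)}_n}$ accepted by some $t\in X$. A nonnegative square matrix is primitive if some power of it has all entries positive. *)

(* Defs.v *)
From HB Require Import structures.
From mathcomp Require Import all_boot all_order all_algebra.
From mathcomp Require Import boolp classical_sets reals exp topology normedtype sequences.

Set Implicit Arguments.
Unset Strict Implicit.
Unset Printing Implicit Defensive.

Import Order.TTheory GRing.Theory Num.Theory.

Section Semigroup.
Variables (k : nat) (K : 'I_k -> 'I_k -> bool).

Definition adm (w : seq 'I_k) : bool := sorted (fun a b => K a b) w.

(* Elements of G = <S_k | K>, identified with their minimal representations. *)
Definition Gelt := {w : seq 'I_k | adm w}.

(* Multiply a reduced word on the right by a generator s: if the last letter a
   satisfies K(a,s) = 0 then a s = 1 cancels, otherwise s is appended. *)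
Definition push (w : seq 'I_k) (s : 'I_k) : seq 'I_k :=
  match rev w with
  | a :: r => if K a s then rcons w s else rev r
  | [::] => [:: s]
  end.

Lemma adm_push w s : adm w -> adm (push w s).
Proof.
rewrite /push; case/lastP: w => [|w a] //=.
rewrite rev_rcons revK /adm => Hw.
case: ifP => Kas.
  case: w Hw => [|b w] /=; first by rewrite Kas.
  by move=> Hw; rewrite rcons_path last_rcons Hw Kas.
case: w Hw => [|b w] //=.
by rewrite rcons_path => /andP [].
Qed.

Definition red (w : seq 'I_k) : seq 'I_k := foldl push [::] w.

Lemma adm_red w : adm (red w).
Proof.
rewrite /red; have : adm [::] by [].
elim: w [::] => [|s w IH] v //= Hv.
by apply: IH; apply: adm_push.
Qed.

Definition gmul (g h : Gelt) : Gelt := exist _ (red (val g ++ val h)) (adm_red _).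

Definition glen (g : Gelt) : nat := size (val g).

Definition gen (i : 'I_k) : Gelt := exist (fun w => adm w) [:: i] isT.

Definition words (m : nat) : seq (seq 'I_k) :=
  map (fun t : m.-tuple 'I_k => tval t) (enum {: m.-tuple 'I_k}).

Definition ballG (n : nat) : seq Gelt :=
  pmap insub (flatten [seq words m | m <- iota 0 n.+1]).

Definition semiball (g : Gelt) (n : nat) : seq Gelt :=
  undup [seq gmul g h | h <- ballG n & glen (gmul g h) == glen g + glen h].

Definition Kmx : 'M[int]_k := \matrix_(i, j) (Posz (K i j : nat)).
Definition primitive : Prop :=
  exists m : nat, (0 < m)%N /\
    forall i j : 'I_k, (0 < (iter m (mulmx Kmx) 1%:M) i j)%R.

Variable A : finType.

Definition config := Gelt -> A.

(* A pattern u : H -> A with H a finite subset of G (given as a list). *)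
Definition pattern := (seq Gelt * (Gelt -> A))%type.

Definition accepts (t : config) (u : pattern) : Prop :=
  exists g : Gelt, forall h, h \in u.1 -> t (gmul g h) = u.2 h.

Definition is_tree_shift (X : set config) : Prop :=
  exists F : set pattern, forall t, X t <-> (forall u, F u -> ~ accepts t u).

(* p^{(g)}_n: number of patterns on the n-semiball at g accepted by some t in X.
   A pattern on the semiball D is encoded by its values on the enumeration of D. *)
Definition pcount (X : set config) (g : Gelt) (n : nat) : nat :=
  let D := semiball g n in
  #|[set u : {ffun 'I_(size D) -> A} |
      `[< exists t, X t /\ exists g' : Gelt,
            forall i : 'I_(size D), t (gmul g' (nth g D i)) = u i >]]|.

Definition pratio (R : realType) (X : set config) (i : 'I_k) (n : nat) : R :=
  (ln (pcount X (gen i) n)%:R / (size (semiball (gen i) n))%:R)%R.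

End Semigroup.

(* Main.v *)
Require Import Defs.
From HB Require Import structures.
From mathcomp Require Import all_boot all_order all_algebra.
From mathcomp Require Import boolp classical_sets reals exp topology normedtype sequences.
From mathcomp Require Import zify ring lra.
Import Order.TTheory GRing.Theory Num.Theory.
Import numFieldNormedType.Exports.
Set Implicit Arguments.
Unset Strict Implicit.
Unset Printing Implicit Defensive.

Section Comb.
Variables (k : nat) (K : 'I_k -> 'I_k -> bool).

Lemma push_adm_cat w v : adm K (w ++ v) -> foldl (push K) w v = w ++ v.
Proof.
elim: v w => [|s v IH] w /=; first by rewrite cats0.
move=> H; have -> : push K w s = rcons w s.
  rewrite /push; case/lastP: w H => [|w a] //=.
  rewrite rev_rcons /= => H.
  have : K a s.
    move: H; rewrite /adm cat_rcons.
    case: w => [|b w] /=; first by case/andP.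
    by rewrite cat_path /= => /andP[_ /andP[_ /andP[]]].
  by move=> ->.
by rewrite IH -cats1 -?catA.
Qed.

Lemma red_adm w : adm K w -> red K w = w.
Proof. by move=> H; rewrite /red push_adm_cat. Qed.

Lemma red_cat u v : red K (u ++ v) = foldl (push K) (red K u) v.
Proof. by rewrite /red foldl_cat. Qed.

Definition pos (g : Gelt K) (p : seq 'I_k) : Gelt K :=
  exist (fun w => adm K w) (red K (val g ++ p)) (adm_red K _).

Lemma pos_cat g p q : pos (pos g p) q = pos g (p ++ q).
Proof.
apply: val_inj => /=; rewrite catA (red_cat (val g ++ p) q).
by rewrite red_cat (red_adm (adm_red _ _)).
Qed.

End Comb.

Section Count.
Variables (k : nat) (K : 'I_k -> 'I_k -> bool) (A : finType) (X : set (config K A)).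

Definition PW (T : Type) (pf : T -> seq 'I_k) (x0 : T) (P : seq T) :
  {set {ffun 'I_(size P) -> A}} :=
  [set u : {ffun 'I_(size P) -> A} | `[< exists t, X t /\ exists g, forall i : 'I_(size P),
              t (pos g (pf (nth x0 P i))) = u i >]].

Lemma pcountE j n :
  pcount X (gen K j) n = #|PW val (gen K j) (semiball (gen K j) n)|.
Proof. by []. Qed.

Lemma cover2 (T T1 T2 : eqType) (pf : T -> seq 'I_k) (pf1 : T1 -> seq 'I_k)
   (pf2 : T2 -> seq 'I_k) x0 y0 z0 (P : seq T) (P1 : seq T1) (P2 : seq T2) w1 w2 :
  (forall x, x \in P -> (exists2 y, y \in P1 & pf x = w1 ++ pf1 y) \/
                        (exists2 y, y \in P2 & pf x = w2 ++ pf2 y)) ->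
  (#|PW pf x0 P| <= #|PW pf1 y0 P1| * #|PW pf2 z0 P2|)%N.
Proof.
move=> Hcov.
have [->|[u0 Hu0]] := set_0Vmem (PW pf x0 P); first by rewrite cards0.
move: Hu0; rewrite inE => /asboolP [t0 [Xt0 [g0 H0]]].
pose Q (u : {ffun 'I_(size P) -> A}) := exists tg : config K A * Gelt K, X tg.1 /\
   forall i : 'I_(size P), tg.1 (pos tg.2 (pf (nth x0 P i))) = u i.
pose wit (u : {ffun 'I_(size P) -> A}) := match pselect (Q u) with
  | left H => projT1 (cid H) | right _ => (t0, g0) end.
have Hwit : forall u, u \in PW pf x0 P -> X (wit u).1 /\
   forall i : 'I_(size P), (wit u).1 (pos (wit u).2 (pf (nth x0 P i))) = u i.
  move=> u; rewrite inE => /asboolP [t [Xt [g Hg]]].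
  rewrite /wit; case: pselect => [H|H]; first exact: (projT2 (cid H)).
  by exfalso; apply: H; exists (t, g).
pose F (u : {ffun 'I_(size P) -> A}) := ([ffun i : 'I_(size P1) => (wit u).1 (pos (pos (wit u).2 w1) (pf1 (nth y0 P1 i)))],
             [ffun i : 'I_(size P2) => (wit u).1 (pos (pos (wit u).2 w2) (pf2 (nth z0 P2 i)))]).
have Finj : {in PW pf x0 P &, injective F}.
  move=> u v Hu Hv [E1 E2]; apply/ffunP => i.
  have [Xu Hu'] := Hwit u Hu; have [Xv Hv'] := Hwit v Hv.
  rewrite -Hu' -Hv'.
  have := Hcov _ (mem_nth x0 (ltn_ord i)); case=> [[y yP Ey]|[y yP Ey]]; rewrite Ey -!pos_cat.
    have iy : (index y P1 < size P1)%N by rewrite index_mem.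
    have /ffunP/(_ (Ordinal iy)) := E1; rewrite !ffunE /= nth_index //.
  have iy : (index y P2 < size P2)%N by rewrite index_mem.
  have /ffunP/(_ (Ordinal iy)) := E2; rewrite !ffunE /= nth_index //.
rewrite -(card_in_imset Finj) -cardsX; apply: subset_leq_card.
apply/fintype.subsetP => _ /finset.imsetP [u Hu ->]; have [Xu Hu'] := Hwit u Hu.
rewrite inE /= !inE; apply/andP; split; apply/asboolP; exists (wit u).1; split => //.
  by exists (pos (wit u).2 w1) => i; rewrite ffunE.
by exists (pos (wit u).2 w2) => i; rewrite ffunE.
Qed.

End Count.

Section Blocks.
Variables (k : nat) (K : 'I_k -> 'I_k -> bool) (A : finType) (X : set (config K A)).

Definition pfQ (x : seq 'I_k * Gelt K) : seq 'I_k := x.1 ++ val x.2.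
Definition g0 : Gelt K := exist (fun w => adm K w) [::] isT.
Definition Qb (M : nat) (L : seq (seq 'I_k * 'I_k)) : seq (seq 'I_k * Gelt K) :=
  flatten [seq [seq (pb.1, e) | e <- semiball (gen K pb.2) M] | pb <- L].

Lemma PW_nil (T : Type) pf (x0 : T) : (#|PW X pf x0 [::]| <= 1)%N.
Proof.
apply: leq_trans (max_card _) _; rewrite card_ffun card_ord expn0 //.
Qed.

Lemma blocks M L :
  (#|PW X pfQ ([::], g0) (Qb M L)| <= \prod_(pb <- L) pcount X (gen K pb.2) M)%N.
Proof.
elim: L => [|pb L IH]; first by rewrite big_nil PW_nil.
rewrite big_cons /Qb /= -/(Qb M L).
apply: leq_trans (leq_mul (leqnn _) IH).
rewrite pcountE.
apply: (@cover2 _ _ _ _ _ _ _ pfQ val pfQ _ (gen K pb.2) ([::], g0) _ _ _ pb.1 [::]).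
move=> x; rewrite mem_cat => /orP [/mapP [e He ->]|Hx]; [left|right].
  by exists e.
by exists x.
Qed.

End Blocks.

Section Lay.
Variables (k : nat) (K : 'I_k -> 'I_k -> bool).

Fixpoint lay (n : nat) (j : 'I_k) : seq (seq 'I_k) :=
  if n is n'.+1 then
    flatten [seq [seq b :: h | h <- lay n' b] | b <- [seq b <- enum 'I_k | K j b]]
  else [:: [::]].

Lemma adm_cons2 j b h : adm K (j :: b :: h) = K j b && adm K (b :: h).
Proof. by []. Qed.

Lemma adm_behead a h : adm K (a :: h) -> adm K h.
Proof. by case: h => // b h; rewrite adm_cons2 => /andP[]. Qed.

Lemma mem_lay n j h : (h \in lay n j) = (size h == n) && adm K (j :: h).
Proof.
elim: n j h => [|n IH] j h.
  by case: h => [|b h] //=; rewrite inE.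
change (h \in lay n.+1 j) with
  (h \in flatten [seq [seq b :: h | h <- lay n b] | b <- [seq b <- enum 'I_k | K j b]]).
apply/idP/idP.
  case/flatten_mapP => b; rewrite mem_filter => /andP [Kjb _] /mapP [h' Hh' ->].
  by move: Hh'; rewrite IH adm_cons2 Kjb => /andP [Hs ->]; rewrite /= eqSS Hs.
case: h => [|b h]; first by [].
rewrite adm_cons2 [size _]/= eqSS => /andP [Hs /andP [Kjb Ha]].
apply/flatten_mapP; exists b; first by rewrite mem_filter Kjb mem_enum.
by apply/mapP; exists h => //; rewrite IH Hs.
Qed.

Lemma uniq_flat_cons (s : seq 'I_k) (F : 'I_k -> seq (seq 'I_k)) :
  uniq s -> (forall b, uniq (F b)) ->
  uniq (flatten [seq [seq b :: h | h <- F b] | b <- s]).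
Proof.
move=> Us UF; elim: s Us => [|b s IH] //= /andP [bs Us].
rewrite cat_uniq IH // andbT (map_inj_uniq (fun x y (E : b :: x = b :: y) => congr1 behead E)) ?UF //=.
apply/hasPn => x /flatten_mapP [b' b's /mapP [h' _ ->]].
apply/mapP => [[h'' _ [E _]]]; by move: b's; rewrite E (negbTE bs).
Qed.

Lemma lay_uniq n j : uniq (lay n j).
Proof.
elim: n j => [|n IH] j //=.
by apply: uniq_flat_cons => //; apply: filter_uniq; apply: enum_uniq.
Qed.

Lemma size_flat_cons (s : seq 'I_k) (F : 'I_k -> seq (seq 'I_k)) :
  size (flatten [seq [seq b :: h | h <- F b] | b <- s]) = (\sum_(b <- s) size (F b))%N.
Proof. by elim: s => [|b s IH]; rewrite ?big_nil ?big_cons //= size_cat size_map IH. Qed.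

Definition frontN j n (f : 'I_k -> nat) : nat :=
  (\sum_(h <- lay n j) \sum_(b <- enum 'I_k | K (last j h) b) f b)%N.

Lemma size_lay_split n d j :
  size (lay (n + d).+1 j) = frontN j n (fun b => size (lay d b)).
Proof.
elim: n j => [|n IH] j.
  by rewrite /frontN /= big_seq1 size_flat_cons big_filter.
rewrite addSn /= size_flat_cons /frontN /=.
rewrite big_flatten /= big_map !big_filter.
apply: eq_bigr => b Kjb.
rewrite big_map IH /frontN.
by apply: eq_bigr.
Qed.

End Lay.

Section Semi.
Variables (k : nat) (K : 'I_k -> 'I_k -> bool).

Definition Pj (j : 'I_k) n (x : seq 'I_k) : bool :=
  if x is a :: h then (a == j) && (size h <= n) && adm K x else false.

Lemma PjE j n a h : Pj j n (a :: h) = (a == j) && (size h <= n) && adm K (a :: h).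
Proof. by []. Qed.

Lemma mem_words m w : (w \in words k m) = (size w == m).
Proof.
apply/idP/idP.
  by case/mapP => t _ ->; rewrite size_tuple.
move/eqP => Hw; apply/mapP; exists (Tuple (introT eqP Hw)) => //.
by rewrite mem_enum.
Qed.

Lemma mem_ballG n (h : Gelt K) : (h \in ballG K n) = (size (val h) <= n).
Proof.
rewrite /ballG mem_pmap_sub; apply/idP/idP.
  case/flatten_mapP => m; rewrite mem_iota add0n ltnS => Hm.
  by rewrite mem_words => /eqP ->.
move=> Hs; apply/flatten_mapP; exists (size (val h)).
  by rewrite mem_iota add0n ltnS.
by rewrite mem_words.
Qed.

Lemma red_cons j h : adm K h ->
  red K (j :: h) = if adm K (j :: h) then j :: h else behead h.
Proof.
case: h => [|b h] Hh; first by [].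
have E : red K (j :: b :: h) = foldl (push K) (if K j b then [:: j; b] else [::]) h by [].
rewrite E adm_cons2 Hh andbT; case Kjb: (K j b).
  by rewrite push_adm_cat // adm_cons2 Kjb.
exact: red_adm (adm_behead Hh).
Qed.

Lemma mem_semiball j n (d : Gelt K) :
  (d \in semiball (gen K j) n) = Pj j n (val d).
Proof.
apply/idP/idP.
  rewrite mem_undup => /mapP [h]; rewrite mem_filter => /andP [Hlen Hb] ->.
  move: Hlen; rewrite /glen /gmul /= red_cons ?(valP h) //.
  case: ifP => Ha.
    by move=> _; rewrite PjE eqxx Ha andbT -(mem_ballG n h).
  case: (val h) => [|b r] /=; first by rewrite add1n.
  by rewrite add1n eqn_leq ltnNge leqnSn andbF.
case: d => [[|a h] Ha] //= /andP [/andP [/eqP aj Hs] _]; subst a.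
rewrite mem_undup; apply/mapP.
exists (exist (fun w => adm K w) h (adm_behead Ha)).
  by rewrite mem_filter mem_ballG Hs andbT /glen /gmul /= red_cons ?Ha ?(adm_behead Ha).
apply: val_inj; rewrite /gmul /= red_cons ?Ha //; exact: adm_behead Ha.
Qed.

Fixpoint Ts (j : 'I_k) n : seq (seq 'I_k) :=
  if n is n'.+1 then Ts j n' ++ [seq j :: h | h <- lay K n j]
  else [seq j :: h | h <- lay K 0 j].

Lemma mem_Ts j n x : (x \in Ts j n) = Pj j n x.
Proof.
elim: n x => [|n IH] x.
  rewrite /=; case: x => [|a [|b h]] //; rewrite inE PjE /=.
  by rewrite ltn0 andbF eqseq_cons andbF.
rewrite (_ : Ts j n.+1 = Ts j n ++ [seq j :: h | h <- lay K n.+1 j]) // mem_cat IH.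
apply/orP/idP.
- case=> [|/mapP [h]].
  + case: x => [|a h] //; rewrite !PjE => /andP [/andP [-> Hs] ->].
    by rewrite (leq_trans Hs).
  + by rewrite mem_lay => /andP [/eqP Hs Ha] ->; rewrite PjE eqxx Hs Ha leqnn.
- case: x => [|a h] //; rewrite PjE => /andP [/andP [/eqP aj Hs] Ha]; subst a.
  rewrite leq_eqVlt in Hs; case/orP: Hs => Hs; [right|left].
  + by apply/mapP; exists h => //; rewrite mem_lay Hs Ha.
  + by rewrite PjE eqxx Ha andbT -ltnS.
Qed.

Lemma Ts_uniq j n : uniq (Ts j n).
Proof.
have Hinj : injective (cons j) by move=> x y E; exact: (congr1 behead E).
elim: n => [|n IH].
  by rewrite (_ : Ts j 0 = [seq j :: h | h <- lay K 0 j]) // (map_inj_uniq Hinj) lay_uniq.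
rewrite (_ : Ts j n.+1 = Ts j n ++ [seq j :: h | h <- lay K n.+1 j]) //.
rewrite cat_uniq IH (map_inj_uniq Hinj) lay_uniq andbT.
apply/hasPn => x /mapP [h]; rewrite mem_lay => /andP [/eqP Hs _] ->.
by rewrite mem_Ts PjE Hs ltnn !andbF.
Qed.

Lemma size_semiball j n :
  size (semiball (gen K j) n) = (\sum_(m < n.+1) size (lay K m j))%N.
Proof.
have -> : size (semiball (gen K j) n) = size (Ts j n).
  rewrite -(size_map val); apply: perm_size; apply: uniq_perm.
  - by rewrite (map_inj_uniq val_inj) // undup_uniq.
  - exact: Ts_uniq.
  move=> x; rewrite mem_Ts; apply/mapP/idP => [[d Hd ->]|Hx].
    by rewrite -mem_semiball.
  have Ha : adm K x by case: x Hx => [|a h] //= /andP [].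
  by exists (exist _ x Ha) => //; rewrite mem_semiball.
elim: n => [|n IH].
  by rewrite big_ord1 (_ : Ts j 0 = [seq j :: h | h <- lay K 0 j]) // size_map.
rewrite big_ord_recr (_ : Ts j n.+1 = Ts j n ++ [seq j :: h | h <- lay K n.+1 j]) //.
by rewrite size_cat IH size_map.
Qed.

End Semi.

Section Split.
Variables (k : nat) (K : 'I_k -> 'I_k -> bool) (A : finType) (X : set (config K A)).

Definition sb j n := size (semiball (gen K j) n).

Lemma frontN_add j n f g :
  (frontN K j n f + frontN K j n g)%N = frontN K j n (fun b => f b + g b)%N.
Proof.
rewrite /frontN -big_split; apply: eq_bigr => h _; by rewrite -big_split.
Qed.

Lemma size_split j n M : sb j (n + M).+1 = (sb j n + frontN K j n (fun b => sb b M))%N.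
Proof.
rewrite /sb; elim: M => [|M IH].
  rewrite addn0 !size_semiball big_ord_recr /=; congr addn.
  have := size_lay_split K n 0 j; rewrite addn0 => ->.
  by apply: eq_bigr => h _; apply: eq_bigr => b _; rewrite size_semiball big_ord1.
rewrite addnS size_semiball big_ord_recr -size_semiball.
change (size (semiball (gen K j) (n + M).+1) + size (lay K (n + M).+2 j) =
  size (semiball (gen K j) n) + frontN K j n (fun b => size (semiball (gen K b) M.+1)))%N.
rewrite IH -addnA -addnS; congr addn.
rewrite size_lay_split frontN_add.
by apply: eq_bigr => h _; apply: eq_bigr => b _; rewrite !size_semiball [in RHS]big_ord_recr.
Qed.

Definition frontP j n (f : 'I_k -> nat) : nat :=
  (\prod_(h <- lay K n j) \prod_(b <- enum 'I_k | K (last j h) b) f b)%N.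

Lemma pcount_split j n M :
  (pcount X (gen K j) (n + M).+1 <=
     pcount X (gen K j) n * frontP j n (fun b => pcount X (gen K b) M))%N.
Proof.
set L := [seq (j :: h, b) | h <- lay K n j, b <- [seq b <- enum 'I_k | K (last j h) b]].
have -> : frontP j n (fun b => pcount X (gen K b) M) =
          (\prod_(pb <- L) pcount X (gen K pb.2) M)%N.
  by rewrite big_allpairs_dep; apply: eq_bigr => h _; rewrite big_filter.
apply: leq_trans (leq_mul (leqnn _) (blocks X M L)).
rewrite !pcountE.
apply: (@cover2 _ _ A X _ _ _ val val (@pfQ k K) (gen K j) (gen K j) ([::], g0 K)
          _ _ _ [::] [::]).
move=> x; rewrite mem_semiball; case: x => [w Hw] /=.
case: w Hw => [|a h] Hw //; rewrite PjE => /andP [/andP [/eqP aj Hs] _]; subst a.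
case: (leqP (size h) n) => Hn.
  left; exists (exist (fun w => adm K w) (j :: h) Hw) => //.
  by rewrite mem_semiball PjE eqxx Hn Hw.
right.
case Edr: (drop n h) => [|b r].
  by move: Hn; rewrite -subn_gt0 -size_drop Edr.
set h0 := take n h.
have Eh : h = h0 ++ b :: r by rewrite -Edr cat_take_drop.
have Hsz : size h0 = n by rewrite size_take Hn.
have Hw' : path (fun a b => K a b) j (h0 ++ b :: r) by rewrite -Eh; exact: Hw.
move: Hw'; rewrite cat_path => /andP [P1 /andP [Kb P2]].
exists (j :: h0, exist (fun w => adm K w) (b :: r) P2); last by rewrite /pfQ /= Eh.
apply/flatten_mapP; exists (j :: h0, b).
  apply/allpairsPdep; exists h0, b; split => //.
    by rewrite mem_lay Hsz eqxx.
  by rewrite mem_filter Kb mem_enum.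
apply/mapP; exists (exist (fun w => adm K w) (b :: r) P2) => //.
rewrite mem_semiball PjE eqxx /=.
move: Hs; rewrite Eh size_cat Hsz /= => Hs.
apply/andP; split; [lia | exact: P2].
Qed.

End Split.

Section Prim.
Variables (k : nat) (K : 'I_k -> 'I_k -> bool).

Lemma leq_term_seq (I : eqType) (r : seq I) (P : pred I) (F : I -> nat) x :
  x \in r -> P x -> (F x <= \sum_(y <- r | P y) F y)%N.
Proof.
elim: r => [|y r IH] //; rewrite inE big_cons => /orP [/eqP <-|Hx] Px.
  by rewrite Px leq_addr.
by case: ifP => _; [apply: leq_trans (IH Hx Px) (leq_addl _ _)|exact: IH].
Qed.

Lemma frontN_ge_term j n c f :
  (exists2 h, h \in lay K n j & K (last j h) c) -> (f c <= frontN K j n f)%N.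
Proof.
case=> h Hh Kc; apply: leq_trans (leq_term_seq (fun h => \sum_(b <- enum 'I_k | K (last j h) b) f b) Hh isT).
exact: (leq_term_seq f (mem_enum _ c) Kc).
Qed.

Lemma frontN_mono j n f g : (forall b, f b <= g b)%N -> (frontN K j n f <= frontN K j n g)%N.
Proof. by move=> H; apply: leq_sum => h _; apply: leq_sum => b _. Qed.

Lemma frontN_mulc j n c f : frontN K j n (fun b => c * f b)%N = (c * frontN K j n f)%N.
Proof. by rewrite /frontN big_distrr; apply: eq_bigr => h _; rewrite big_distrr. Qed.

Lemma path_lemma m i j : (0 < (iter m (mulmx (Kmx K)) 1%:M) i j)%R ->
  exists2 h, h \in lay K m i & last i h = j.
Proof.
elim: m i => [|m IH] i.
  rewrite /= mxE; case: eqP => [<-|] //= _; exists [::] => //.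
rewrite iterS mxE => Hs.
have [l Hl] : exists l, (0 < Kmx K i l * (iter m (mulmx (Kmx K)) 1%:M) l j)%R.
  apply/existsP; apply: contraTT Hs => /existsPn Hn; rewrite -leNgt.
  by apply: sumr_le0 => l _; have := Hn l; rewrite -leNgt.
move: Hl; rewrite /Kmx mxE; case Kil: (K i l); rewrite ?mul0r ?ltxx // mul1r => Hl.
have [h Hh Hlast] := IH l Hl.
exists (l :: h) => //.
by move: Hh; rewrite !mem_lay adm_cons2 Kil [size _]/= eqSS.
Qed.

Lemma prim_front m' i c : (0 < (iter m'.+1 (mulmx (Kmx K)) 1%:M) i c)%R ->
  exists2 h, h \in lay K m' i & K (last i h) c.
Proof.
move/path_lemma => [h]; case/lastP: h => [|h x]; first by rewrite mem_lay.
rewrite mem_lay size_rcons eqSS last_rcons => /andP [Hs Ha] <-.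
have : path (fun a b => K a b) i (rcons h x) by exact: Ha.
rewrite rcons_path => /andP [Hp Kx]; exists h => //.
by rewrite mem_lay Hs.
Qed.

Variable m' : nat.
Hypothesis Hprim : forall i j : 'I_k, (0 < (iter m'.+1 (mulmx (Kmx K)) 1%:M) i j)%R.

Lemma succ_ex a : exists b, K a b.
Proof.
have [h Hh Kl] := prim_front (Hprim a a).
case: h Hh Kl => [|b h] Hh Kl; first by exists a.
by exists b; move: Hh; rewrite mem_lay adm_cons2 => /andP [_ /andP []].
Qed.

Lemma lay_ne n j : exists h, h \in lay K n j.
Proof.
elim: n j => [|n IH] j; first by exists [::].
have [b Kjb] := succ_ex j; have [h Hh] := IH b.
by exists (b :: h); move: Hh; rewrite !mem_lay adm_cons2 Kjb /= eqSS.
Qed.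

Lemma sb_ge j n : (n.+1 <= sb K j n)%N.
Proof.
rewrite /sb size_semiball -{1}(card_ord n.+1) -sum1_card.
apply: leq_sum => m _; have [h Hh] := lay_ne m j.
by case: (lay K m j) Hh.
Qed.

Variable i0 : 'I_k.

Definition Sig n := (\sum_(c < k) sb K c n)%N.
Definition Wt j := frontN K j m' (fun _ => 1%N).
Definition Dc := (\sum_(j < k) (sb K j m' + Wt j))%N.

Lemma sb_le_sum c n : (sb K c n <= Sig n)%N.
Proof. by rewrite /Sig (bigD1 c) //= leq_addr. Qed.

Lemma sb_up j n : (sb K j (m' + n).+1 <= Dc * Sig n)%N.
Proof.
rewrite size_split.
have H1 : (frontN K j m' (fun b => sb K b n) <= Wt j * Sig n)%N.
  rewrite mulnC -frontN_mulc; apply: frontN_mono => b; rewrite muln1; exact: sb_le_sum.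
have H2 : (1 <= Sig n)%N.
  exact: leq_trans (ltn0Sn n) (leq_trans (sb_ge i0 n) (sb_le_sum i0 n)).
have H3 : (sb K j m' + Wt j <= Dc)%N by rewrite /Dc (bigD1 j) //= leq_addr.
apply: leq_trans (leq_add (leqnn _) H1) _.
apply: leq_trans (_ : (sb K j m' + Wt j) * Sig n <= _)%N; last exact: leq_mul H3 (leqnn _).
by rewrite mulnDl leq_add2r -{1}(muln1 (sb K j m')) leq_mul2l H2 orbT.
Qed.

Lemma sb_le_shift i c n : (sb K c n <= sb K i (m' + n).+1)%N.
Proof.
rewrite size_split; apply: leq_trans (leq_addl _ _).
exact: (frontN_ge_term (fun b => sb K b n) (prim_front (Hprim i c))).
Qed.

Lemma Sig_le i n : (Sig n <= k * sb K i (m' + n).+1)%N.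
Proof.
have -> : (k * sb K i (m' + n).+1 = \sum_(c < k) sb K i (m' + n).+1)%N.
  by rewrite sum_nat_const card_ord.
by apply: leq_sum => c _; exact: sb_le_shift.
Qed.

Definition Bc := (Dc * (k * (Dc * k)))%N.

Lemma sb_bound i j n : (m'.+1 <= n)%N -> (sb K j (m' + n).+1 <= Bc * sb K i n)%N.
Proof.
move=> Hn; have -> : n = (m' + (n - m'.+1)).+1 by rewrite -addSn subnKC.
set p := n - m'.+1.
apply: leq_trans (sb_up j _) _.
have H1 : (Sig (m' + p).+1 <= k * (Dc * Sig p))%N.
  have -> : (k * (Dc * Sig p) = \sum_(c < k) (Dc * Sig p))%N.
    by rewrite sum_nat_const card_ord.
  by apply: leq_sum => c _; exact: sb_up.
have H2 := Sig_le i p.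
apply: leq_trans (leq_mul (leqnn Dc) H1) _.
apply: leq_trans (leq_mul (leqnn Dc) (leq_mul (leqnn k) (leq_mul (leqnn Dc) H2))) _.
by rewrite /Bc !mulnA.
Qed.

End Prim.

Local Open Scope classical_set_scope.
Local Open Scope ring_scope.

Section Abs.
Variables (R : realType) (k : nat) (a : 'I_k -> nat -> R).

Definition amax n : R := \big[Num.max/0%R]_(j < k) a j n.

Lemma small_eventually (C eps : R) : 0 <= C -> 0 < eps ->
  \forall n \near \oo, C / n.+1%:R <= eps.
Proof.
move=> C0 e0; near=> n.
have Hn : C / eps <= n%:R by near: n; apply: nbhs_infty_ger.
rewrite ler_pdivrMr // -ler_pdivrMl //.
rewrite mulrC; apply: le_trans Hn _; rewrite ler_nat; exact: leqnSn.
Unshelve. all: end_near.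
Qed.

Lemma abstract_lim (i : 'I_k) :
  (forall j n, 0 <= a j n) ->
  (forall M, exists2 C : R, 0 <= C & forall N, amax N <= amax M + C / N.+1%:R) ->
  (exists C B : R, exists m : nat, [/\ 0 <= C, 0 <= B &
     forall n, (m <= n)%N -> amax n - C / n.+1%:R - B * `|amax (n + m) - amax n| <= a i n]) ->
  (fun n => a i n) @ \oo --> inf [set x | exists n, x = amax n].
Proof.
move=> Hpos HU [C [B [m [C0 B0 HL]]]].
set S := [set x | exists n, x = amax n].
have amax0 n : 0 <= amax n by apply: bigmax_ge_id.
have hS : has_lbound S by exists 0 => x [n ->].
have neS : S !=set0 by exists (amax 0), 0.
set h := inf S.
have h_le n : h <= amax n by apply: (ge_inf hS); exists n.
have ai_le n : a i n <= amax n by apply: le_bigmax.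
apply/cvgrPdist_le => eta eta0.
have d0 : 0 < 2 + 2 * B by rewrite ltr_wpDr ?mulr_ge0 // ltr0n.
set eps := eta / (2 + 2 * B).
have eps0 : 0 < eps by rewrite divr_gt0.
have Heta : eta = eps * (2 + 2 * B) by rewrite /eps divfK // gt_eqF.
have [e [M ->] HM] := inf_adherent eps0 (conj neS hS).
have [CM CM0 HUM] := HU M.
have HM2 : amax M < h + eps := HM.
clear HM.
near=> n.
have Hmn : (m <= n)%N by near: n; exact: nbhs_infty_ge.
have H1 : CM / n.+1%:R <= eps by near: n; exact: small_eventually.
have H2 : C / n.+1%:R <= eps by near: n; exact: small_eventually.
have H3 : CM / (n + m).+1%:R <= CM / n.+1%:R.
  by apply: ler_wpM2l => //; rewrite lef_pV2 ?posrE ?ltr0n // ler_nat ltnS leq_addr.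
have U1 : amax n <= h + 2 * eps.
  have := HUM n; move: H1 HM2; clear; move: (CM / n.+1%:R) (amax n) (amax M) => t x y; lra.
have U2 : amax (n + m) <= h + 2 * eps.
  have := HUM (n + m); move: H1 H3 HM2; clear.
  move: (CM / n.+1%:R) (CM / (n + m).+1%:R) (amax (n + m)) (amax M) => t t' x y; lra.
have L1 := h_le n; have L2 := h_le (n + m).
have Dabs : `|amax (n + m) - amax n| <= 2 * eps.
  rewrite ler_norml; apply/andP; split; lra.
have HB : B * `|amax (n + m) - amax n| <= B * (2 * eps) by apply: ler_wpM2l.
have Hl := HL n Hmn; have Hu := ai_le n.
have E1 : eps * (2 + 2 * B) = 2 * eps + 2 * (B * eps).
  by ring.
have HB' : B * `|amax (n + m) - amax n| <= 2 * (B * eps).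
  by have -> : 2 * (B * eps) = B * (2 * eps) by ring.
have Be0 : 0 <= B * eps by rewrite mulr_ge0 // ltW.
rewrite Heta E1 ler_norml; move: Hl Hu HB' Be0 L1 U1 H2; clear.
move: (B * `|amax (n + m) - amax n|) (B * eps) (C / n.+1%:R) (a i n) (amax n) => p q r s t.
move=> *; apply/andP; split; lra.
Unshelve. all: end_near.
Qed.

End Abs.

Section Glue.
Variables (R : realType) (k : nat) (K : 'I_k -> 'I_k -> bool) (A : finType)
  (X : set (config K A)).

Definition frontR j n (f : 'I_k -> R) : R :=
  \sum_(h <- lay K n j) \sum_(b <- enum 'I_k | K (last j h) b) f b.
Definition sR j n : R := (sb K j n)%:R.
Definition LR j n : R := ln (pcount X (gen K j) n)%:R.

Lemma frontR_nat j n f : frontR j n (fun b => (f b)%:R) = (frontN K j n f)%:R.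
Proof. by rewrite /frontN natr_sum; apply: eq_bigr => h _; rewrite natr_sum. Qed.

Lemma frontR_add j n f g : frontR j n (fun b => f b + g b) = frontR j n f + frontR j n g.
Proof. by rewrite /frontR -big_split; apply: eq_bigr => h _; rewrite -big_split. Qed.

Lemma frontR_scale j n c f : frontR j n (fun b => c * f b) = c * frontR j n f.
Proof. by rewrite /frontR mulr_sumr; apply: eq_bigr => h _; rewrite mulr_sumr. Qed.

Lemma frontR_le j n f g : (forall b, f b <= g b) -> frontR j n f <= frontR j n g.
Proof. by move=> H; apply: ler_sum => h _; apply: ler_sum => b _. Qed.

Lemma ler_term_seq (I : eqType) (r : seq I) (P : pred I) (F : I -> R) x :
  x \in r -> P x -> (forall y, P y -> F y <= 0) -> \sum_(y <- r | P y) F y <= F x.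
Proof.
move=> + + Hn; elim: r => [|y r IH] //; rewrite inE big_cons => /orP [/eqP <-|Hx] Px.
  by rewrite Px gerDl sumr_le0.
case: ifP => Py; last exact: IH.
by rewrite -(add0r (F x)); apply: lerD; [exact: Hn | exact: IH].
Qed.

Lemma frontR_le_term j n c f : (forall b, f b <= 0) ->
  (exists2 h, h \in lay K n j & K (last j h) c) -> frontR j n f <= f c.
Proof.
move=> Hf [h Hh Kc].
apply: le_trans (ler_term_seq (F := fun h => \sum_(b <- enum 'I_k | K (last j h) b) f b) Hh isT _) _.
  by move=> y _; apply: sumr_le0 => b _.
exact: (ler_term_seq (mem_enum _ c) Kc).
Qed.

Lemma ln_prodn (I : Type) (r : seq I) (P : pred I) (F : I -> nat) :
  (forall x, 0 < F x)%N ->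
  ln ((\prod_(x <- r | P x) F x)%:R : R) = \sum_(x <- r | P x) ln (F x)%:R.
Proof.
move=> HF; elim: r => [|y r IH]; first by rewrite !big_nil ln1.
rewrite !big_cons; case: ifP => // _.
by rewrite natrM lnM ?IH // posrE ltr0n // prodn_gt0.
Qed.

Lemma LR_ge0 j n : 0 <= LR j n.
Proof.
rewrite /LR; case: (pcount X (gen K j) n) => [|p]; first by rewrite ln0.
by apply: ln_ge0; rewrite ler1n.
Qed.

Lemma sR_ge0 j n : 0 <= sR j n.
Proof. exact: ler0n. Qed.

Lemma RA j n M : sR j (n + M).+1 = sR j n + frontR j n (fun b => sR b M).
Proof. by rewrite /sR size_split natrD -frontR_nat. Qed.

Hypothesis Xne : exists t, X t.

Lemma pcount_gt0 g n : (0 < pcount X g n)%N.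
Proof.
have [t Xt] := Xne; apply/card_gt0P.
exists [ffun i : 'I_(size (semiball g n)) => t (gmul g (nth g (semiball g n) i))]; rewrite inE; apply/asboolP.
by exists t; split => //; exists g => i; rewrite ffunE.
Qed.

Lemma RB j n M : LR j (n + M).+1 <= LR j n + frontR j n (fun b => LR b M).
Proof.
have H := pcount_split X j n M.
have Hp : (0 < pcount X (gen K j) n * frontP K j n (fun b => pcount X (gen K b) M))%N.
  by rewrite muln_gt0 pcount_gt0 /frontP !prodn_gt0 // => h; rewrite prodn_gt0 // => b; exact: pcount_gt0.
apply: le_trans (_ : ln ((pcount X (gen K j) n * frontP K j n (fun b => pcount X (gen K b) M))%:R) <= _).
  by rewrite /LR ler_ln ?posrE ?ltr0n ?pcount_gt0 // ler_nat.
rewrite natrM lnM ?posrE ?ltr0n ?pcount_gt0 //; last by move: Hp; rewrite muln_gt0 => /andP [].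
rewrite lerD2l /frontP ln_prodn; last by move=> h; rewrite prodn_gt0 // => b; exact: pcount_gt0.
rewrite /frontR; apply: ler_sum => h _; rewrite ln_prodn //; move=> b; exact: pcount_gt0.
Qed.

End Glue.


Section Main.
Variables (R : realType) (k : nat) (K : 'I_k -> 'I_k -> bool) (A : finType)
  (X : set (config K A)).

Local Notation sr := (sR R K).
Local Notation lr := (LR R X).
Local Notation fr := (@frontR R k K).
Local Notation a := (fun j n => pratio R X j n).

Lemma a_ge0 j n : 0 <= a j n.
Proof. by apply: divr_ge0; [exact: LR_ge0 | exact: ler0n]. Qed.

Variable m' : nat.
Hypothesis Hprim : forall i j : 'I_k, (0 < (iter m'.+1 (mulmx (Kmx K)) 1%:M) i j)%R.

Lemma sr_geN j n : n.+1%:R <= sr j n.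
Proof. by rewrite /sR ler_nat; exact: sb_ge Hprim j n. Qed.

Lemma sr_gt0 j n : 0 < sr j n.
Proof. by apply: lt_le_trans (sr_geN j n); rewrite ltr0n. Qed.

Lemma lrE j n : lr j n = a j n * sr j n.
Proof. by rewrite /pratio divfK // gt_eqF // sr_gt0. Qed.

Hypothesis Xne : exists t, X t.

Lemma HU_lem M : exists2 C : R, 0 <= C &
  forall N, amax a N <= amax a M + C / N.+1%:R.
Proof.
set am := amax a M.
have am0 : 0 <= am by apply: bigmax_ge_id.
have Lle j : lr j M <= am * sr j M.
  by rewrite lrE ler_wpM2r ?ler0n //; apply: le_bigmax.
set C := \sum_(r < M.+1) \sum_(j < k) lr j r.
have C0 : 0 <= C by apply: sumr_ge0 => r _; apply: sumr_ge0 => j _; exact: LR_ge0.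
exists C => //.
have key : forall N j, lr j N - am * sr j N <= C.
  elim/ltn_ind => N IH j.
  case: (leqP N M) => HNM.
    have h1 : lr j N <= C.
      apply: (@le_trans _ _ (\sum_(j < k) lr j N)).
        by rewrite (bigD1 j) //= lerDl sumr_ge0 // => *; exact: LR_ge0.
      have HN' : (N < M.+1)%N by [].
      rewrite /C (bigD1 (Ordinal HN')) //= lerDl.
      by apply: sumr_ge0 => *; apply: sumr_ge0 => *; exact: LR_ge0.
    have : 0 <= am * sr j N by rewrite mulr_ge0 // ler0n.
    lra.
  set n := (N - M.+1)%N.
  have E : N = (n + M).+1 by rewrite -addnS subnK.
  have Hn : (n < N)%N by rewrite E ltnS leq_addr.
  have R1 := RB R Xne j n M; have R2 := RA R K j n M.
  have R3 : fr j n (fun b => lr b M) <= am * fr j n (fun b => sr b M).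
    by rewrite -frontR_scale; apply: frontR_le => b; exact: Lle.
  have := IH n Hn j.
  rewrite E R2 mulrDr; move: R1 R3; rewrite -E.
  move: (lr j N) (lr j n) (fr j n (fun b => lr b M)) (am * fr j n (fun b => sr b M))
        (am * sr j n) => p q r s t; lra.
move=> N; apply: bigmax_le; first by rewrite addr_ge0 // divr_ge0.
move=> j _; change (lr j N / sr j N <= am + C / N.+1%:R).
rewrite ler_pdivrMr ?sr_gt0 // mulrDl.
have H1 : C <= C / N.+1%:R * sr j N.
  apply: (@le_trans _ _ (C / N.+1%:R * N.+1%:R)); first by rewrite divfK // pnatr_eq0.
  by apply: ler_wpM2l; [rewrite divr_ge0 | exact: sr_geN].
have := key N j; move: H1.
move: (C / N.+1%:R * sr j N) (am * sr j N) (lr j N) => p q r; lra.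
Qed.

Lemma HL_lem i : exists C B : R, exists m : nat, [/\ 0 <= C, 0 <= B &
  forall n, (m <= n)%N -> amax a n - C / n.+1%:R - B * `|amax a (n + m) - amax a n| <= a i n].
Proof.
exists (\sum_(j < k) lr j m'), (Bc K m')%:R, m'.+1; split.
- by apply: sumr_ge0 => j _; exact: LR_ge0.
- exact: ler0n.
move=> n Hn.
have EN : (n + m'.+1 = (m' + n).+1)%N by rewrite addnS addnC.
rewrite EN; set N := (m' + n).+1.
have [j _ Hj] := @eq_bigmax _ _ _ 0 i xpredT (fun j => a j N) isT (fun j _ => a_ge0 j N).
have Hj' : amax a N = a j N := Hj.
rewrite Hj'.
set C := \sum_(j < k) lr j m'.
set B := (Bc K m')%:R.
set as_ := amax a n.
have x0 : 0 <= a j N := a_ge0 j N.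
have F1 : lr j N = a j N * sr j N := lrE j N.
have F2 : lr j N <= lr j m' + fr j m' (fun b => lr b n) := RB R Xne j m' n.
have F3 : sr j N = sr j m' + fr j m' (fun b => sr b n) := RA R K j m' n.
set S := fr j m' (fun b => sr b n).
have F4 : fr j m' (fun b => lr b n) = fr j m' (fun b => lr b n - as_ * sr b n) + as_ * S.
  rewrite /S -frontR_scale -frontR_add.
  by apply: eq_bigr => h _; apply: eq_bigr => b _; rewrite subrK.
have F5 : fr j m' (fun b => lr b n - as_ * sr b n) <= lr i n - as_ * sr i n.
  apply: (frontR_le_term (c := i)).
    by move=> b; rewrite subr_le0 lrE ler_wpM2r ?ler0n //; apply: le_bigmax.
  exact: prim_front (Hprim j i).
have F6 : lr j m' <= C.
  by rewrite /C (bigD1 j) //= lerDl sumr_ge0 // => *; exact: LR_ge0.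
have S0 : 0 <= S.
  by rewrite /S /frontR; apply: sumr_ge0 => h _; apply: sumr_ge0 => b _; exact: ler0n.
have F7 : a j N * S <= a j N * sr j N by rewrite F3 ler_wpM2l // lerDr ler0n.
have F8 : S <= B * sr i n.
  apply: (@le_trans _ _ (sr j N)); first by rewrite F3 lerDr ler0n.
  rewrite /B /sR -natrM ler_nat; exact: sb_bound.
have Fab : - (`|a j N - as_| * (B * sr i n)) <= a j N * S - as_ * S.
  rewrite -mulrBl; apply: (@le_trans _ _ (- `|a j N - as_| * S)).
    by rewrite mulNr lerN2; apply: ler_wpM2l.
  by apply: ler_wpM2r => //; rewrite lerNl -normrN; exact: ler_norm.
have G : C <= C / n.+1%:R * sr i n.
  apply: (@le_trans _ _ (C / n.+1%:R * n.+1%:R)); first by rewrite divfK // pnatr_eq0.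
  apply: ler_wpM2l; [rewrite divr_ge0 // /C; apply: sumr_ge0 => *; exact: LR_ge0 | exact: sr_geN].
change (as_ - C / n.+1%:R - B * `|a j N - as_| <= lr i n / sr i n).
rewrite ler_pdivlMr ?sr_gt0 //.
have -> : (as_ - C / n.+1%:R - B * `|a j N - as_|) * sr i n =
   as_ * sr i n - C / n.+1%:R * sr i n - `|a j N - as_| * (B * sr i n) by ring.
move: F1 F2 F4 F5 F6 F7 Fab G.
clearbody C B as_ S.
move: (lr j N) (a j N * sr j N) (lr j m') (fr j m' (fun b => lr b n))
  (fr j m' (fun b => lr b n - as_ * sr b n)) (as_ * S) (lr i n) (as_ * sr i n)
  (a j N * S) (`|a j N - as_| * (B * sr i n)) (C / n.+1%:R * sr i n) => *.
lra.
Qed.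

End Main.

Lemma pratio0 (R : realType) (k : nat) (K : 'I_k -> 'I_k -> bool)
    (A : finType) (X : set (config K A)) j n :
  ~ (exists t, X t) -> pratio R X j n = 0.
Proof.
move=> Xne; rewrite /pratio.
have -> : pcount X (gen K j) n = 0%N.
  apply: eq_card0 => u; rewrite inE; apply/negbTE; apply/negP => /asboolP [t [Xt _]].
  by apply: Xne; exists t.
by rewrite ln0 ?mul0r.
Qed.

Theorem theorem3p6 (R : realType) (k : nat) (K : 'I_k -> 'I_k -> bool)
    (A : finType) (X : set (config K A)) :
  is_tree_shift X -> primitive K ->
  forall i : 'I_k,
    (fun n => pratio R X i n) @ \oo -->
      inf [set x : R | exists n : nat,
             x = \big[Num.max/0%R]_(j < k) pratio R X j n].
Proof.
move=> _ [[|m'] [m0 Hp]] i //.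
apply: (@abstract_lim R k (fun j n => pratio R X j n) i).
- by move=> j n; exact: a_ge0.
- case: (pselect (exists t, X t)) => Xne.
    by move=> M; exact: HU_lem Hp Xne M.
  move=> M; exists 0 => // N; rewrite mul0r addr0.
  apply: bigmax_le; first exact: bigmax_ge_id.
  by move=> j _; rewrite pratio0 //; exact: bigmax_ge_id.
- case: (pselect (exists t, X t)) => Xne.
    exact: HL_lem Hp Xne i.
  exists 0, 0, 0%N; split => // n _.
  rewrite mul0r mul0r !subr0 pratio0 //.
  by apply: bigmax_le => // j _; rewrite pratio0.
Qed.
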